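(* Let $n,k\ge 0$ be integers with $n\ge 2k-1$. For every $\alpha\in F_n(2,k)$, the list $\mathcal{F}(\alpha)$ is suffix partitioned.
   Context: The weight of a binary word is its number of 1's. $F_n(2,k)$ is the set of binary words of length $n$ and weight $k$ containing no two consecutive 1's. A homogeneous transposition of a binary word exchanges a 1 and a 0 such that no 1 occurs strictly between the two exchanged positions. For a set $S$ of binary words of the same length and weight and $\alpha\in S$, the list obtained by applying the greedy algorithm for $S$ to $\alpha$ is built as follows: start with the list $(\alpha)$; repeatedly, for the last word $w$ of the current list, among all words obtainable from $w$ by one homogeneous transposition that lie in $S$ and do not already occur in the list, choose the one obtained by transposing the leftmost possible 1 with (among transpositions of that 1) the leftmost possible 0, and append it; stop when no such word exists. $\mathcal{F}(\alpha)$ denotes the list obtained by applying the greedy algorithm for $F_n(2,k)$ to $\alpha\in F_n(2,k)$. A list is suffix partitioned if, for every word $s$, the words of the list having suffix $s$ occupy consecutive positions. *)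

(* Defs.v *)
(* Binary words are sequences of booleans (true = 1, false = 0),
   read left to right: position 0 is the leftmost letter. *)
From mathcomp Require Import all_boot.
Set Implicit Arguments. Unset Strict Implicit. Unset Printing Implicit Defensive.

Definition word := seq bool.

Definition weight (w : word) : nat := count id w.

Definition no11 (w : word) : bool :=
  all (fun i => ~~ (nth false w i && nth false w i.+1)) (iota 0 (size w)).

Definition inF (n k : nat) (w : word) : bool :=
  [&& size w == n, weight w == k & no11 w].

Definition swap (w : word) (i j : nat) : word :=
  set_nth false (set_nth false w i false) j true.

Definition homog (w : word) (i j : nat) : bool :=
  [&& i < size w, j < size w, nth false w i, ~~ nth false w j &
   all (fun p => ~~ nth false w p)
       (iota (minn i j).+1 ((maxn i j - minn i j).-1))].

(* Candidate next words from the last word w, for the greedy algorithm on S,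
   listed in the order (leftmost 1 first, then leftmost 0): row-major in (i,j). *)
Definition candidates (S : pred word) (L : seq word) (w : word) : seq word :=
  [seq swap w ij.1 ij.2 |
     ij <- [seq (i, j) | i <- iota 0 (size w), j <- iota 0 (size w)] &
     homog w ij.1 ij.2 && (swap w ij.1 ij.2 \in S)
     && (swap w ij.1 ij.2 \notin L)].

Fixpoint greedy_aux (fuel : nat) (S : pred word) (L : seq word) (w : word)
  : seq word :=
  match fuel with
  | 0 => L
  | f.+1 =>
      match candidates S L w with
      | [::] => L
      | v :: _ => greedy_aux f S (rcons L v) v
      end
  end.

(* Since the list never repeats a word and all its
   words have length size alpha, at most 2^(size alpha) steps can be taken, so
   the fuel 2^(size alpha) is enough for the algorithm to stop by itself. *)
Definition greedy (S : pred word) (alpha : word) : seq word :=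
  greedy_aux (2 ^ size alpha) S [:: alpha] alpha.

Definition calF (n k : nat) (alpha : word) : seq word := greedy (inF n k) alpha.

Definition suffix_partitioned (L : seq word) : Prop :=
  forall (s : word) (a b c : nat),
    a <= b -> b <= c -> c < size L ->
    suffix s (nth [::] L a) -> suffix s (nth [::] L c) ->
    suffix s (nth [::] L b).

(* Main.v *)
Require Import Defs.
From mathcomp Require Import all_boot.
From mathcomp Require Import zify.
Set Implicit Arguments. Unset Strict Implicit. Unset Printing Implicit Defensive.

Notation nthw w p := (nth false w p).

Lemma wordP (u v : word) : size u = size v -> (forall p, nthw u p = nthw v p) -> u = v.
Proof. by move=> hs hp; apply: (eq_from_nth (x0:=false)) => // i _; apply: hp. Qed.

Lemma no11P w : reflect (forall p, ~~ (nthw w p && nthw w p.+1)) (no11 w).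
Proof.
apply: (iffP allP) => H p.
- case: (ltnP p (size w)) => hp; first by apply: H; rewrite mem_iota.
  by rewrite nth_default.
- by move=> _; apply: H.
Qed.

Lemma nth_swap w i j p :
  nthw (swap w i j) p = if p == j then true else if p == i then false else nthw w p.
Proof. by rewrite /swap nth_set_nth /= nth_set_nth /=. Qed.

Lemma size_swap w i j : size (swap w i j) = maxn j.+1 (maxn i.+1 (size w)).
Proof. by rewrite /swap !size_set_nth. Qed.

Lemma nth_lift0 u p : nthw (rcons u false) p = nthw u p.
Proof.
rewrite nth_rcons; case: ltnP => // h; rewrite nth_default //; by case: eqP.
Qed.

Lemma nth_lift1 u p : nthw (u ++ [:: false; true]) p = nthw u p || (p == (size u).+1).
Proof.
rewrite nth_cat; case: ltnP => h.
  by rewrite (_ : (p == (size u).+1) = false) ?orbF //; lia.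
rewrite (nth_default _ h) /=; case E: (p - size u) => [|[|q]] /=; rewrite ?nth_nil; lia.
Qed.

Lemma homog_bound w i j : homog w i j -> (i < size w) && (j < size w).
Proof. by case/and5P=> -> ->. Qed.

Lemma homog_between w i j p : homog w i j -> minn i j < p < maxn i j -> ~~ nthw w p.
Proof.
case/and5P=> _ _ _ _ /allP H hp; apply: H; rewrite mem_iota; lia.
Qed.


Definition valid (S : pred word) (L : seq word) (w : word) (ij : nat * nat) : bool :=
  homog w ij.1 ij.2 && (swap w ij.1 ij.2 \in S) && (swap w ij.1 ij.2 \notin L).

Definition pairs N : seq (nat * nat) := [seq (i, j) | i <- iota 0 N, j <- iota 0 N].

Lemma candE S L w :
  candidates S L w = [seq swap w ij.1 ij.2 | ij <- filter (valid S L w) (pairs (size w))].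
Proof. by []. Qed.

Definition lexlt (a b : nat * nat) : bool := (a.1 < b.1) || (a.1 == b.1) && (a.2 < b.2).

Lemma pairs_mem N i j : ((i, j) \in pairs N) = (i < N) && (j < N).
Proof.
apply/allpairsP/idP.
- by case=> [[x y]] /= [hx hy [-> ->]]; move: hx hy; rewrite !mem_iota; lia.
- by move=> h; exists (i, j) => /=; rewrite !mem_iota; split => //; lia.
Qed.

Lemma pairs_pw_gen M n a : pairwise lexlt [seq (i, j) | i <- iota a n, j <- iota 0 M].
Proof.
elim: n a => [|n IH] a //=.
rewrite pairwise_cat IH andbT; apply/andP; split.
- apply/allrelP => x y /mapP [j _ ->] /allpairsP [[i' j'] /= [hi _ ->]].
  move: hi; rewrite mem_iota /lexlt /=; lia.
- rewrite pairwise_map; have := iota_ltn_sorted 0 M.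
  rewrite sorted_pairwise; last by move=> ???; lia.
  by apply: sub_pairwise => x y /=; rewrite /lexlt /=; lia.
Qed.

Lemma pairs_pw N : pairwise lexlt (pairs N).
Proof. exact: pairs_pw_gen. Qed.

Lemma valid_pairs S L w i j : valid S L w (i, j) -> (i, j) \in pairs (size w).
Proof. by case/andP=> /andP[/homog_bound h _] _; rewrite pairs_mem. Qed.

Lemma cand_head S L w v r : candidates S L w = v :: r ->
  exists ij, [/\ valid S L w ij, v = swap w ij.1 ij.2 &
    forall ij', valid S L w ij' -> ij = ij' \/ lexlt ij ij'].
Proof.
rewrite candE; case E: (filter _ _) => [|ij rest] //= [hv _].
have hpw := pairwise_filter (valid S L w) (pairs_pw (size w)); rewrite E /= in hpw.
have : ij \in filter (valid S L w) (pairs (size w)) by rewrite E mem_head.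
rewrite mem_filter => /andP [hij _].
exists ij; split => // -[i j] hv'.
have : (i, j) \in filter (valid S L w) (pairs (size w)) by rewrite mem_filter hv' (valid_pairs hv').
rewrite E inE => /orP [/eqP -> | hin]; first by left.
by right; case/andP: hpw => /allP /(_ _ hin).
Qed.

Lemma cand_nil S L w : candidates S L w = [::] -> forall ij, ~~ valid S L w ij.
Proof.
rewrite candE => E0 [i j]; apply/negP => hv.
have E : filter (valid S L w) (pairs (size w)) = [::] by move: E0; case: (filter _ _).
have : (i, j) \in filter (valid S L w) (pairs (size w)) by rewrite mem_filter hv (valid_pairs hv).
by rewrite E.
Qed.

Lemma cand_none S L w : (forall ij, ~~ valid S L w ij) -> candidates S L w = [::].
Proof.
move=> H; rewrite candE; case E: (filter _ _) => [|ij rest] //.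
have : ij \in filter (valid S L w) (pairs (size w)) by rewrite E mem_head.
by rewrite mem_filter (negbTE (H ij)).
Qed.

Lemma cand_min S L w ij : valid S L w ij ->
  (forall ij', valid S L w ij' -> ij = ij' \/ lexlt ij ij') ->
  exists r, candidates S L w = swap w ij.1 ij.2 :: r.
Proof.
move=> hv hmin; case E: (candidates S L w) => [|v r].
  by move: (cand_nil E ij); rewrite hv.
have [ij' [hv' -> hmin']] := cand_head E; exists r.
have [->|h1] := hmin' _ hv; first by [].
have [->|h2] := hmin _ hv'; first by [].
move: h1 h2; rewrite /lexlt; lia.
Qed.

Inductive gseq (S : pred word) : seq word -> word -> seq word -> Prop :=
| GNil L w : gseq S L w [::]
| GCons L w v r T : candidates S L w = v :: r -> gseq S (rcons L v) v T ->
    gseq S L w (v :: T).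

Lemma gseq_cat S L w T1 T2 : gseq S L w T1 -> gseq S (L ++ T1) (last w T1) T2 ->
  gseq S L w (T1 ++ T2).
Proof.
elim=> [L0 w0|L0 w0 v r T0 hc hg IH] /=; first by rewrite cats0.
move=> h; apply: GCons hc _; apply: IH; by rewrite cat_rcons.
Qed.

Lemma gseq_greedy S L w T f : gseq S L w T -> candidates S (L ++ T) (last w T) = [::] ->
  greedy_aux f S L w = L ++ take f T.
Proof.
move=> hg; elim: hg f => [L0 w0|L0 w0 v r T0 hc hg IH] f.
  move=> h; rewrite cats0 /= in h; case: f => [|f] /=; rewrite ?h cats0 //.
move=> h; case: f => [|f]; first by rewrite cats0.
rewrite /= hc IH; first by rewrite cat_rcons.
by rewrite cat_rcons.
Qed.

Lemma gseq_in (S : pred word) L w T : gseq S L w T -> S w -> forall x, x \in T -> S x.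
Proof.
elim=> [//|L0 w0 v r T0 hc hg IH] hw x.
have [ij [hv hvE _]] := cand_head hc.
case/andP: hv => /andP[_ hs] _; rewrite -hvE in hs.
rewrite inE => /orP [/eqP -> //|hx]; exact: (IH hs x hx).
Qed.

Lemma last_in (S : pred word) w T : S w -> (forall x, x \in T -> S x) -> S (last w T).
Proof.
elim: T w => [|x T IH] w //= hw hT; apply: IH; first by apply: hT; rewrite mem_head.
by move=> y hy; apply: hT; rewrite inE hy orbT.
Qed.

Lemma SP_take L t : suffix_partitioned L -> suffix_partitioned (take t L).
Proof.
move=> H s a b c hab hbc; rewrite size_take => hc.
have hct : c < t by move: hc; case: (ltnP t (size L)); lia.
have hcL : c < size L by move: hc; case: (ltnP t (size L)); lia.
rewrite !nth_take //; try lia; apply: H => //.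
Qed.

Lemma SP_small L : size L <= 1 -> suffix_partitioned L.
Proof. by move=> hL s a b c hab hbc hc; have -> : b = a by lia. Qed.

Lemma SP_cat X Y : suffix_partitioned X -> suffix_partitioned Y ->
  (forall s, (forall x, x \in X -> ~~ suffix s x) \/ (forall y, y \in Y -> ~~ suffix s y)
     \/ (forall z, suffix s z)) -> suffix_partitioned (X ++ Y).
Proof.
move=> HX HY Hs s a b c hab hbc; rewrite size_cat => hc; rewrite !nth_cat.
case: (ltnP c (size X)) => hcX.
  have ha : a < size X by lia. have hb : b < size X by lia.
  rewrite ha hb; exact: HX.
case: (ltnP a (size X)) => haX.
- move=> h1 h2; case: (Hs s) => [H|[H|H]]; last exact: H.
  + by move: (H _ (mem_nth [::] haX)); rewrite h1.
  + have : c - size X < size Y by lia.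
    by move=> /(mem_nth [::]) /H; rewrite h2.
- have hb : size X <= b by lia. rewrite ltnNge hb /=.
  apply: HY; move: hab hbc hc hcX haX hb; set sx := size X; set sy := size Y; lia.
Qed.

Lemma SP_map f A : suffix_partitioned A ->
  (forall s, (forall u, suffix s (f u)) \/ (forall u, ~~ suffix s (f u)) \/
     exists s', forall u, suffix s (f u) = suffix s' u) ->
  suffix_partitioned (map f A).
Proof.
move=> HA Hs s a b c hab hbc; rewrite size_map => hc.
rewrite !(nth_map [::]); try lia.
case: (Hs s) => [H|[H|[s' H]]].
- by rewrite H.
- by rewrite (negbTE (H _)).
- rewrite !H; exact: HA.
Qed.

Definition lift0 (u : word) : word := rcons u false.
Definition lift1 (u : word) : word := u ++ [:: false; true].

Lemma lift1E u : lift1 u = rcons (rcons u false) true.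
Proof. by rewrite /lift1 -!cats1 -catA. Qed.

Lemma suf_lift0 s : (forall u, suffix s (lift0 u)) \/ (forall u, ~~ suffix s (lift0 u)) \/
     exists s', forall u, suffix s (lift0 u) = suffix s' u.
Proof.
case/lastP: s => [|s' b]; first by left => u; rewrite suffix0s.
case: b.
- by right; left => u; rewrite /lift0 suffix_rcons.
- by right; right; exists s' => u; rewrite /lift0 suffix_rcons.
Qed.

Lemma suf_lift1 s : (forall u, suffix s (lift1 u)) \/ (forall u, ~~ suffix s (lift1 u)) \/
     exists s', forall u, suffix s (lift1 u) = suffix s' u.
Proof.
case/lastP: s => [|s' b]; first by left => u; rewrite suffix0s.
case: b; last by right; left => u; rewrite lift1E suffix_rcons.
case/lastP: s' => [|s'' c].
  by left => u; rewrite lift1E suffix_rcons /= suffix0s.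
case: c.
- by right; left => u; rewrite lift1E !suffix_rcons.
- by right; right; exists s'' => u; rewrite lift1E !suffix_rcons.
Qed.

Lemma suf_sep s : (forall u, ~~ suffix s (lift0 u)) \/ (forall u, ~~ suffix s (lift1 u))
  \/ (forall z, suffix s z).
Proof.
case/lastP: s => [|s' b]; first by right; right => z; rewrite suffix0s.
case: b.
- by left => u; rewrite /lift0 suffix_rcons.
- by right; left => u; rewrite lift1E suffix_rcons.
Qed.

Lemma SP_01 A B : suffix_partitioned A -> suffix_partitioned B ->
  suffix_partitioned (map lift0 A ++ map lift1 B).
Proof.
move=> hA hB; apply: SP_cat; try apply: SP_map; try done; try exact: suf_lift0; try exact: suf_lift1.
move=> s; case: (suf_sep s) => [H|[H|H]]; [left|right;left|right;right] => // x /mapP [u _ ->]; exact: H.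
Qed.

Lemma SP_10 A B : suffix_partitioned A -> suffix_partitioned B ->
  suffix_partitioned (map lift1 B ++ map lift0 A).
Proof.
move=> hA hB; apply: SP_cat; try apply: SP_map; try done; try exact: suf_lift0; try exact: suf_lift1.
move=> s; case: (suf_sep s) => [H|[H|H]]; [right;left|left|right;right] => // x /mapP [u _ ->]; exact: H.
Qed.

Lemma nth_out u p : size u <= p -> nthw u p = false.
Proof. by move=> h; rewrite nth_default. Qed.

Lemma weight_lift0 u : weight (rcons u false) = weight u.
Proof. by rewrite /weight -cats1 count_cat /= !addn0. Qed.

Lemma weight_lift1 u : weight (lift1 u) = (weight u).+1.
Proof. by rewrite /weight /lift1 count_cat /= addn0 add0n addn1. Qed.

Lemma no11_lift0 u : no11 (rcons u false) = no11 u.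
Proof. by apply/no11P/no11P => H p; move: (H p); rewrite !nth_lift0. Qed.

Lemma no11_lift1 u : no11 (lift1 u) = no11 u.
Proof.
apply/no11P/no11P => H p; move: (H p); rewrite /lift1 !nth_lift1;
  set b1 := nthw u p; set b2 := nthw u p.+1; set s := size u.
- lia.
- have e1 : s <= p -> b1 = false by move=> h; exact: nth_out.
  have e2 : s <= p.+1 -> b2 = false by move=> h; exact: nth_out.
  lia.
Qed.

Lemma inF_lift0 N k u : inF N.+1 k (rcons u false) = inF N k u.
Proof. by rewrite /inF size_rcons eqSS weight_lift0 no11_lift0. Qed.

Lemma inF_lift1 N k u : inF N.+2 k.+1 (lift1 u) = inF N k u.
Proof. by rewrite /inF /lift1 size_cat /= addn2 !eqSS weight_lift1 eqSS no11_lift1. Qed.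

Lemma nthw_eq_all (u v : word) (s : seq nat) : (forall p, nthw u p = nthw v p) ->
  all (fun p => ~~ nthw u p) s = all (fun p => ~~ nthw v p) s.
Proof. by move=> h; apply: eq_all => p; rewrite h. Qed.

Lemma homog_lift0 w i j : j < size w -> homog (rcons w false) i j = homog w i j.
Proof.
move=> hj; rewrite /homog size_rcons !nth_lift0 (nthw_eq_all _ (nth_lift0 w)).
case hi: (nthw w i); last by rewrite !andbF.
have hi' : i < size w by case: (ltnP i (size w)) => // h; rewrite nth_out in hi.
rewrite hi' hj; have -> : i < (size w).+1 by lia. by have -> : j < (size w).+1 by lia.
Qed.

Lemma swap_lift0 w i j : i < size w -> j < size w ->
  swap (rcons w false) i j = rcons (swap w i j) false.
Proof.
move=> hi hj; apply: wordP.
  by rewrite size_swap !size_rcons size_swap; lia.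
by move=> p; rewrite nth_swap !nth_lift0 nth_swap.
Qed.

Lemma swap_lift1 w i j : i < size w -> j < size w ->
  swap (lift1 w) i j = lift1 (swap w i j).
Proof.
move=> hi hj; apply: wordP.
  by rewrite size_swap /lift1 !size_cat size_swap /=; lia.
move=> p; rewrite nth_swap /lift1 !nth_lift1 nth_swap size_swap.
have -> : maxn j.+1 (maxn i.+1 (size w)) = size w by lia.
case: (eqVneq p j) => [->|_]; first by rewrite (_ : (j == (size w).+1) = false) //; lia.
case: (eqVneq p i) => [->|_] //; by rewrite (_ : (i == (size w).+1) = false) //; lia.
Qed.

Lemma in_inF n k x : (x \in inF n k) = inF n k x.
Proof. by []. Qed.

Lemma valid_lift0 N k L' L w i j : size w = N -> j < N ->
  (forall u, size u = N -> (rcons u false \in L') = (u \in L)) ->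
  valid (inF N.+1 k) L' (rcons w false) (i, j) = valid (inF N k) L w (i, j).
Proof.
move=> hs hj hL; rewrite /valid /= homog_lift0 ?hs //.
case hh: (homog w i j) => //=; have /andP [hi hj'] := homog_bound hh.
rewrite swap_lift0 // !in_inF inF_lift0 hL // size_swap; lia.
Qed.

Lemma homog_lift1 w i j : i < (size w).+1 -> j != size w -> homog (lift1 w) i j = homog w i j.
Proof.
move=> hi hj; rewrite /homog /lift1 size_cat /= !nth_lift1.
have -> : (i == (size w).+1) = false by lia. rewrite orbF.
case hni: (nthw w i); last by rewrite !andbF.
have hi' : i < size w by case: (ltnP i (size w)) => // h; rewrite nth_out in hni.
case: (ltnP j (size w)) => hj'.
- have -> : (j == (size w).+1) = false by lia.
  rewrite hi'; have -> : i < size w + 2 by lia.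
  have -> : j < size w + 2 by lia. rewrite /=.
  congr (_ && _); first by rewrite orbF. apply: eq_in_all => p; rewrite mem_iota => hp.
  rewrite nth_lift1; have -> : (p == (size w).+1) = false by lia. by rewrite orbF.
- rewrite andbF; case: (ltnP j (size w + 2)) => hj2; last by rewrite andbF.
  have -> : j == (size w).+1 by lia. by rewrite orbT /= !andbF.
Qed.

Lemma valid_lift1 N k L' L w i j : size w = N -> i < N.+1 ->
  (forall u, size u = N -> (lift1 u \in L') = (u \in L)) ->
  valid (inF N.+2 k.+1) L' (lift1 w) (i, j) = valid (inF N k) L w (i, j).
Proof.
move=> hs hi hL; case: (eqVneq j N) => [->|hjN].
- have -> : valid (inF N k) L w (i, N) = false.
    apply/negP => /andP [/andP [/homog_bound /andP [_]]]; by rewrite hs ltnn.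
  apply/negP => /andP [/andP [hh]]; rewrite in_inF => /and3P [_ _ /no11P H] _.
  have hni : nthw (lift1 w) i by case/and5P: hh.
  have hiN : i < N.
    move: hni; rewrite /lift1 nth_lift1 hs; case: (ltnP i N) => // hh2.
    by rewrite nth_out ?hs //=; lia.
  move: (H N); rewrite !nth_swap eqxx /lift1 nth_lift1 hs /=.
  have -> : (N.+1 == N) = false by lia. have -> : (N.+1 == i) = false by lia.
  by rewrite eqxx orbT.
- rewrite /valid /= homog_lift1 ?hs //.
  case hh: (homog w i j) => //=; have /andP [hi' hj'] := homog_bound hh.
  rewrite swap_lift1 // !in_inF inF_lift1 hL // size_swap; lia.
Qed.

Lemma inF_size n k w : inF n k w -> size w = n.
Proof. by case/and3P => /eqP. Qed.

Lemma valid_homog S L w ij : valid S L w ij -> homog w ij.1 ij.2.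
Proof. by case/andP => /andP []. Qed.

Lemma valid_in S L w ij : valid S L w ij -> swap w ij.1 ij.2 \in S.
Proof. by case/andP => /andP []. Qed.

Lemma step0 N k L' L w v r : inF N k w ->
  (forall u, size u = N -> (rcons u false \in L') = (u \in L)) ->
  candidates (inF N k) L w = v :: r ->
  exists r', candidates (inF N.+1 k) L' (rcons w false) = rcons v false :: r'.
Proof.
move=> hw hL hc; have hs := inF_size hw.
have [[i0 j0] [hv hvE hmin]] := cand_head hc.
have hh0 := valid_homog hv; have /andP [hi0 hj0] := homog_bound hh0; rewrite /= hs in hi0 hj0.
have hv' : valid (inF N.+1 k) L' (rcons w false) (i0, j0) by rewrite (valid_lift0 _ _ hs hj0 hL).
have [r' ->] : exists r', candidates (inF N.+1 k) L' (rcons w false) =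
    swap (rcons w false) (i0, j0).1 (i0, j0).2 :: r'; last first.
  by exists r'; rewrite hvE /= swap_lift0 ?hs.
- apply: (cand_min hv') => -[i j] hvij; case: (ltnP j N) => hj.
    by apply: hmin; rewrite -(valid_lift0 _ _ hs hj hL).
  have hh := valid_homog hvij; have /andP [hi hjN] := homog_bound hh; rewrite /= size_rcons hs in hi hjN.
  have ej : j = N by lia. subst j.
  have hni : nthw w i by move: hh => /and5P [_ _]; rewrite nth_lift0.
  have hni0 : nthw w i0 by case/and5P: hh0.
  have hiN : i < N by case: (ltnP i N) => // h; rewrite nth_out ?hs in hni.
  case: (ltnP i0 i) => hii; first by right; rewrite /lexlt /=; lia.
  case: (eqVneq i0 i) => [<-|hne]; first by right; rewrite /lexlt /=; lia.
  have := homog_between (p := i0) hh; rewrite nth_lift0 hni0 /= => H.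
  by exfalso; move: H; rewrite /=; lia.
Qed.

Lemma stuck0 N k L' L w i j : inF N k w ->
  (forall u, size u = N -> (rcons u false \in L') = (u \in L)) ->
  candidates (inF N k) L w = [::] ->
  valid (inF N.+1 k) L' (rcons w false) (i, j) -> j = N.
Proof.
move=> hw hL hc hv; have hs := inF_size hw.
have /andP [_ hj] := homog_bound (valid_homog hv); rewrite /= size_rcons hs in hj.
case: (ltnP j N) => h; last by lia.
by move: (cand_nil hc (i, j)); rewrite -(valid_lift0 _ _ hs h hL) hv.
Qed.

Lemma step1 N k L' L w v r : inF N k w ->
  (forall u, size u = N -> (lift1 u \in L') = (u \in L)) ->
  candidates (inF N k) L w = v :: r ->
  exists r', candidates (inF N.+2 k.+1) L' (lift1 w) = lift1 v :: r'.
Proof.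
move=> hw hL hc; have hs := inF_size hw.
have [[i0 j0] [hv hvE hmin]] := cand_head hc.
have hh0 := valid_homog hv; have /andP [hi0 hj0] := homog_bound hh0; rewrite /= hs in hi0 hj0.
have hv' : valid (inF N.+2 k.+1) L' (lift1 w) (i0, j0) by rewrite (valid_lift1 _ _ hs _ hL) //; lia.
have [r' ->] : exists r', candidates (inF N.+2 k.+1) L' (lift1 w) =
    swap (lift1 w) (i0, j0).1 (i0, j0).2 :: r'; last first.
  by exists r'; rewrite hvE /= swap_lift1 ?hs.
- apply: (cand_min hv') => -[i j] hvij; case: (ltnP i N.+1) => hi.
    by apply: hmin; rewrite -(valid_lift1 _ _ hs hi hL).
  by right; rewrite /lexlt /=; lia.
Qed.

Lemma stuck1 N k L' L w i j : inF N k w ->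
  (forall u, size u = N -> (lift1 u \in L') = (u \in L)) ->
  candidates (inF N k) L w = [::] ->
  valid (inF N.+2 k.+1) L' (lift1 w) (i, j) -> i = N.+1.
Proof.
move=> hw hL hc hv; have hs := inF_size hw.
have /andP [hi _] := homog_bound (valid_homog hv); rewrite /= /lift1 size_cat hs /= in hi.
case: (ltnP i N.+1) => h; last by lia.
by move: (cand_nil hc (i, j)); rewrite -(valid_lift1 _ _ hs h hL) hv.
Qed.

Lemma lift1_inj : injective lift1.
Proof. move=> u v; rewrite !lift1E => h; exact: (rcons_injl _ (rcons_injl _ h)). Qed.

Lemma lift0_inj : injective lift0.
Proof. move=> u v h; exact: (rcons_injl _ h). Qed.

Lemma mem_lift0 Lo L u : all (fun x => last false x) Lo ->
  (lift0 u \in Lo ++ map lift0 L) = (u \in L).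
Proof.
move=> hLo; rewrite mem_cat (mem_map lift0_inj).
case E: (lift0 u \in Lo) => //; by move: (allP hLo _ E); rewrite /lift0 last_rcons.
Qed.

Lemma mem_lift1 Lo L u : all (fun x => ~~ last false x) Lo ->
  (lift1 u \in Lo ++ map lift1 L) = (u \in L).
Proof.
move=> hLo; rewrite mem_cat (mem_map lift1_inj).
case E: (lift1 u \in Lo) => //; by move: (allP hLo _ E); rewrite lift1E last_rcons.
Qed.

Lemma gseq_lift0 N k Lo L w T : gseq (inF N k) L w T -> inF N k w ->
  all (fun x => last false x) Lo ->
  gseq (inF N.+1 k) (Lo ++ map lift0 L) (lift0 w) (map lift0 T).
Proof.
move=> hg; elim: hg => [L0 w0|L0 w0 v r T0 hc hg IH] hw hLo /=; first by constructor.
have [r' hc'] := step0 (L' := Lo ++ map lift0 L0) hw (fun u _ => mem_lift0 L0 u hLo) hc.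
apply: GCons hc' _.
have -> : rcons (Lo ++ map lift0 L0) (rcons v false) = Lo ++ map lift0 (rcons L0 v)
  by rewrite map_rcons rcons_cat.
apply: IH => //.
have [ij [hv -> _]] := cand_head hc; move: (valid_in hv); by rewrite in_inF.
Qed.

Lemma gseq_lift1 N k Lo L w T : gseq (inF N k) L w T -> inF N k w ->
  all (fun x => ~~ last false x) Lo ->
  gseq (inF N.+2 k.+1) (Lo ++ map lift1 L) (lift1 w) (map lift1 T).
Proof.
move=> hg; elim: hg => [L0 w0|L0 w0 v r T0 hc hg IH] hw hLo /=; first by constructor.
have [r' hc'] := step1 (L' := Lo ++ map lift1 L0) hw (fun u _ => mem_lift1 L0 u hLo) hc.
apply: GCons hc' _.
have -> : rcons (Lo ++ map lift1 L0) (lift1 v) = Lo ++ map lift1 (rcons L0 v)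
  by rewrite map_rcons rcons_cat.
apply: IH => //.
have [ij [hv -> _]] := cand_head hc; move: (valid_in hv); by rewrite in_inF.
Qed.

Definition P n k d : word :=
  mkseq (fun p => (d <= p) && (p < d + (2 * k - 1)) && ((p - d) %% 2 == 0)) n.
Definition top n k := P n k (n.+1 - 2 * k).

Lemma size_P n k d : size (P n k d) = n.
Proof. by rewrite size_mkseq. Qed.

Lemma nthP n k d p :
  nthw (P n k d) p = [&& p < n, d <= p, p < d + (2 * k - 1) & (p - d) %% 2 == 0].
Proof.
case: (ltnP p n) => h; first by rewrite nth_mkseq //= andbA.
by rewrite nth_out // size_P.
Qed.

Lemma P_k0 n d d' : P n 0 d = P n 0 d'.
Proof. apply: wordP; rewrite ?size_P // => p; rewrite !nthP; lia. Qed.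

Lemma P_lift0 n k d : d + (2 * k - 1) <= n -> P n.+1 k d = rcons (P n k d) false.
Proof.
move=> h; apply: wordP; first by rewrite size_rcons !size_P.
move=> p; rewrite nth_lift0 !nthP; lia.
Qed.

Lemma P_lift1 n k d : d + 2 * k = n.+1 -> P n.+2 k.+1 d = lift1 (P n k d).
Proof.
move=> h; apply: wordP; first by rewrite /lift1 size_cat !size_P /=; lia.
move=> p; rewrite /lift1 nth_lift1 !nthP size_P; lia.
Qed.

Lemma count_nth0 w : (forall p, nthw w p = false) -> count id w = 0.
Proof.
elim: w => [|b w IH] //= h; move: (h 0) => /= ->; rewrite IH // => p; exact: (h p.+1).
Qed.

Lemma inF_P n k d : 2 * k <= n.+1 -> d <= n.+1 - 2 * k -> inF n k (P n k d).
Proof.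
elim/ltn_ind: n k d => n IH k d hk hd.
case: k hk hd => [|k] hk hd.
  rewrite /inF size_P eqxx /=; apply/andP; split.
    rewrite /weight count_nth0 // => p; rewrite nthP; lia.
  by apply/no11P => p; rewrite nthP; lia.
case: (ltnP (d + (2 * k.+1 - 1)) n) => h.
  case: n IH hk hd h => [|n] IH hk hd h; first by lia.
  rewrite P_lift0; last by lia.
  rewrite inF_lift0; apply: IH => //; lia.
case: n IH hk hd h => [|[|n]] IH hk hd h; first by lia.
  have ek : k = 0 by lia. have ed : d = 0 by lia. subst.
  by rewrite /P /mkseq /= /inF.
rewrite P_lift1; last by lia.
rewrite inF_lift1; apply: IH; lia.
Qed.

Lemma no11_tail b w : no11 (b :: w) -> no11 w.
Proof. by move/no11P => H; apply/no11P => p; exact: (H p.+1). Qed.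

Lemma wbound_gen n w : size w <= n -> no11 w -> 2 * count id w <= (size w).+1.
Proof.
elim: n w => [|n IH] [|b [|c w]] //= hs hn.
- by clear hn; case: b.
- move: hn; case: b => hn.
  + have hc : c = false by move/no11P: hn => /(_ 0) /=; case: c.
    subst c; have := IH w _ (no11_tail (no11_tail hn)); rewrite /=; lia.
  + have := IH (c :: w) _ (no11_tail hn); rewrite /=; lia.
Qed.

Lemma wbound n k w : inF n k w -> 2 * k <= n.+1.
Proof.
case/and3P => /eqP hs /eqP hk hn; rewrite -hk -hs /weight.
exact: (wbound_gen (leqnn _) hn).
Qed.

Lemma k0_word n w : inF n 0 w -> w = P n 0 0.
Proof.
case/and3P => /eqP hs /eqP hk _; apply: wordP; first by rewrite size_P.
move=> p; rewrite nthP; have -> : [&& p < n, 0 <= p, p < 0 + (2 * 0 - 1) & (p - 0) %% 2 == 0] = false by lia.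
case E: (nthw w p) => //.
have hp : p < size w by case: (ltnP p (size w)) => // h; rewrite nth_out in E.
have : has id w by apply/hasP; exists (nth false w p); [exact: mem_nth | ].
by rewrite has_count /weight in hk *; rewrite hk.
Qed.

Lemma k1_gen w : count id w = 1 -> w = P (size w) 1 (index true w).
Proof.
elim: w => [|b w IH] //=; case: b => /= h.
- have h0 : count id w = 0 by lia.
  apply: wordP; first by rewrite size_P.
  move=> [|p]; first by rewrite nthP.
  rewrite nthP /=; case E: (nthw w p); last by rewrite andbF.
  have hp : p < size w by case: (ltnP p (size w)) => // h1; rewrite nth_out in E.
  have : has id w by apply/hasP; exists (nth false w p); [exact: mem_nth | ].
  by rewrite has_count h0.
- have h1 : count id w = 1 by move: h => /=; rewrite add0n.
  apply: wordP; first by rewrite size_P.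
  move=> [|p]; rewrite nthP /=; first lia.
  have e := IH h1; rewrite {1}e nthP; lia.
Qed.

Lemma k1_word n w : inF n 1 w -> exists2 d, d <= n.+1 - 2 * 1 & w = P n 1 d.
Proof.
move=> hw; case/and3P: hw => /eqP hs /eqP hk _.
have hw' := k1_gen hk; exists (index true w); last by rewrite -hs.
have : has id w by rewrite has_count; move: hk; rewrite /weight => ->.
rewrite has_find -hs /index.
have -> : find (pred1 true) w = find id w by apply: eq_find => x; case: x.
move=> h; move: h; set q := find id w; set s := size w; lia.
Qed.

Lemma class_split n k a : inF n.+2 k a ->
  (exists2 a', a = lift0 a' & inF n.+1 k a') \/
  (exists k', exists2 b, (k = k'.+1 /\ a = lift1 b) & inF n k' b).
Proof.
case/lastP: a => [|a' x]; first by case/and3P.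
case: x => ha.
- right; have hs : size a' = n.+1 by move: (inF_size ha); rewrite size_rcons; case.
  case/lastP: a' hs ha => [|b y] // hs ha.
  have hy : y = false.
    case/and3P: ha => _ _ /no11P /(_ n); rewrite !nth_rcons !size_rcons.
    move: hs; rewrite size_rcons => -[hs]; rewrite hs ltnSn /= ltnn eqxx /=.
    have -> : (n.+1 < n.+1) = false by lia. by rewrite eqxx andbT; case: y.
  subst y; have hw : 0 < k.
    case/and3P: ha => _ /eqP <- _; rewrite /weight -cats1 count_cat /=; lia.
  case: k hw ha => [|k'] // _ ha; exists k', b; first by split => //; rewrite lift1E.
  by rewrite -(inF_lift1 n k' b) lift1E.
- by left; exists a'; rewrite // -inF_lift0.
Qed.

Lemma X0_i N k d L' i : d + 2 * k <= N ->
  valid (inF N.+2 k.+1) L' (rcons (P N.+1 k.+1 d) false) (i, N.+1) -> i = d + 2 * k.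
Proof.
move=> hd hv; have hh : homog (rcons (P N.+1 k.+1 d) false) i N.+1 := valid_homog hv.
have hi : nthw (P N.+1 k.+1 d) i by move: (hh) => /and5P [_ _ h3 _ _]; rewrite nth_lift0 in h3.
rewrite nthP in hi.
case: (ltnP i (d + 2 * k)) => h; last by lia.
have := homog_between (p := d + 2 * k) hh; rewrite nth_lift0 nthP; lia.
Qed.

Lemma X0_swap N k d : d + 2 * k <= N ->
  swap (rcons (P N.+1 k.+1 d) false) (d + 2 * k) N.+1 = lift1 (P N k d).
Proof.
move=> hd; apply: wordP.
  by rewrite size_swap size_rcons size_P /lift1 size_cat size_P /=; lia.
move=> p; rewrite nth_swap /lift1 nth_lift1 size_P nthP.
case: (eqVneq p N.+1) => [e|h1]; first by rewrite orbT.
case: (eqVneq p (d + 2 * k)) => [e|h2]; first by subst p; lia.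
rewrite nth_lift0 nthP; lia.
Qed.

Lemma X0_valid N k d L' : d + 2 * k <= N ->
  valid (inF N.+2 k.+1) L' (rcons (P N.+1 k.+1 d) false) (d + 2 * k, N.+1)
  = (lift1 (P N k d) \notin L').
Proof.
move=> hd; rewrite /valid /= X0_swap // in_inF inF_lift1 inF_P; try lia.
rewrite andbT; have -> // : homog (rcons (P N.+1 k.+1 d) false) (d + 2 * k) N.+1.
rewrite /homog size_rcons size_P !nth_lift0 !nthP; apply/and5P; split; try lia.
apply/allP => p; rewrite mem_iota => hp; rewrite nth_lift0 nthP; lia.
Qed.

Lemma cross0 N k d L' L : d + 2 * k <= N ->
  (forall u, size u = N.+1 -> (rcons u false \in L') = (u \in L)) ->
  candidates (inF N.+1 k.+1) L (P N.+1 k.+1 d) = [::] ->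
  if lift1 (P N k d) \in L' then candidates (inF N.+2 k.+1) L' (lift0 (P N.+1 k.+1 d)) = [::]
  else exists r, candidates (inF N.+2 k.+1) L' (lift0 (P N.+1 k.+1 d)) = lift1 (P N k d) :: r.
Proof.
move=> hd hL hc; have hw : inF N.+1 k.+1 (P N.+1 k.+1 d) by apply: inF_P; lia.
have H : forall ij, valid (inF N.+2 k.+1) L' (lift0 (P N.+1 k.+1 d)) ij -> ij = (d + 2 * k, N.+1).
  move=> [i j] hv; have ej := stuck0 hw hL hc hv; subst j.
  by rewrite (X0_i hd hv).
case: ifP => hin.
- apply: cand_none => ij; apply/negP => hv; have E := H _ hv; subst ij.
  by move: hv; rewrite /lift0 X0_valid // hin.
- have hv : valid (inF N.+2 k.+1) L' (lift0 (P N.+1 k.+1 d)) (d + 2 * k, N.+1).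
    by rewrite /lift0 X0_valid // hin.
  have [r hr] := cand_min hv (fun ij' hv' => or_introl (esym (H _ hv'))).
  by exists r; rewrite hr /= /lift0 X0_swap.
Qed.

Lemma X1_range N k d L' j : (k = 0 -> d = 0) -> d + 2 * k <= N.+1 ->
  valid (inF N.+2 k.+1) L' (lift1 (P N k d)) (N.+1, j) -> d + 2 * k <= j <= N.
Proof.
move=> hk0 hd hv; have hh : homog (lift1 (P N k d)) N.+1 j := valid_homog hv.
have hin : inF N.+2 k.+1 (swap (lift1 (P N k d)) N.+1 j).
  by move: (valid_in hv); rewrite in_inF.
move: (hh) => /and5P [_ hj _ hnj _].
rewrite /lift1 size_cat size_P /= in hj; rewrite /lift1 nth_lift1 size_P nthP in hnj.
case: k hk0 hd hv hh hin hnj => [|k] hk0 hd hv hh hin hnj.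
  by rewrite hk0 //; lia.
case: (ltnP j (d + 2 * k.+1)) => hlt; last by lia.
exfalso; case: (ltnP j (d + 2 * k)) => h1.
  have := homog_between (p := d + 2 * k) hh; rewrite /lift1 nth_lift1 size_P nthP; lia.
case: (eqVneq j (d + 2 * k)) => e; first by move: hnj; rewrite e; lia.
have ej : j = (d + 2 * k).+1 by lia. subst j.
move: hin => /and3P [_ _ /no11P /(_ (d + 2 * k))]; rewrite !nth_swap.
have -> : (d + 2 * k == (d + 2 * k).+1) = false by lia.
have -> : (d + 2 * k == N.+1) = false by lia.
rewrite eqxx /lift1 nth_lift1 size_P nthP; lia.
Qed.

Lemma X1_swap N k d : d + 2 * k <= N ->
  swap (lift1 (P N k d)) N.+1 (d + 2 * k) = lift0 (P N.+1 k.+1 d).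
Proof.
move=> hd; apply: wordP.
  by rewrite size_swap /lift1 /lift0 size_cat size_rcons !size_P /=; lia.
move=> p; rewrite nth_swap /lift0 nth_lift0 nthP.
case: (eqVneq p (d + 2 * k)) => [e|h1]; first by subst p; lia.
case: (eqVneq p N.+1) => [e|h2]; first by subst p; lia.
rewrite /lift1 nth_lift1 size_P nthP; lia.
Qed.

Lemma X1_valid N k d L' : d + 2 * k <= N ->
  valid (inF N.+2 k.+1) L' (lift1 (P N k d)) (N.+1, d + 2 * k)
  = (lift0 (P N.+1 k.+1 d) \notin L').
Proof.
move=> hd; rewrite /valid /= X1_swap // in_inF /lift0 inF_lift0 inF_P; try lia.
rewrite andbT; have -> // : homog (lift1 (P N k d)) N.+1 (d + 2 * k).
rewrite /homog /lift1 size_cat size_P !nth_lift1 !size_P !nthP /=; apply/and5P; split; try lia.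
apply/allP => p; rewrite mem_iota => hp; rewrite nth_lift1 size_P nthP; lia.
Qed.

Lemma cross1_gen N k d L' L : (k = 0 -> d = 0) -> d + 2 * k <= N.+1 ->
  (forall u, size u = N -> (lift1 u \in L') = (u \in L)) ->
  candidates (inF N k) L (P N k d) = [::] ->
  forall i j, valid (inF N.+2 k.+1) L' (lift1 (P N k d)) (i, j) ->
    i = N.+1 /\ d + 2 * k <= j <= N.
Proof.
move=> hk0 hd hL hc; have hw : inF N k (P N k d) by apply: inF_P; lia.
move=> i j hv; have ei := stuck1 hw hL hc hv; subst i; split => //.
exact: X1_range hv.
Qed.

Lemma cross1_step N k d L' L : (k = 0 -> d = 0) -> d + 2 * k <= N ->
  (forall u, size u = N -> (lift1 u \in L') = (u \in L)) ->
  candidates (inF N k) L (P N k d) = [::] ->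
  lift0 (P N.+1 k.+1 d) \notin L' ->
  exists r, candidates (inF N.+2 k.+1) L' (lift1 (P N k d)) = lift0 (P N.+1 k.+1 d) :: r.
Proof.
move=> hk0 hd hL hc hin.
have Hr := cross1_gen hk0 (leqW hd) hL hc.
have hv : valid (inF N.+2 k.+1) L' (lift1 (P N k d)) (N.+1, d + 2 * k) by rewrite X1_valid.
have [r hr] : exists r, candidates (inF N.+2 k.+1) L' (lift1 (P N k d)) =
   swap (lift1 (P N k d)) (N.+1, d + 2 * k).1 (N.+1, d + 2 * k).2 :: r; last first.
  by exists r; rewrite hr X1_swap.
apply: (cand_min hv) => -[i j] /Hr [-> hj].
case: (eqVneq j (d + 2 * k)) => [->|hne]; first by left.
by right; rewrite /lexlt /=; lia.
Qed.

Lemma cross1_top N k d L' L : (k = 0 -> d = 0) -> d + 2 * k = N.+1 ->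
  (forall u, size u = N -> (lift1 u \in L') = (u \in L)) ->
  candidates (inF N k) L (P N k d) = [::] ->
  candidates (inF N.+2 k.+1) L' (lift1 (P N k d)) = [::].
Proof.
move=> hk0 hd hL hc; have Hr := cross1_gen hk0 (eq_leq hd) hL hc.
by apply: cand_none => -[i j]; apply/negP => /Hr [_]; lia.
Qed.

Lemma cross1_k0 N L' L :
  (forall u, size u = N -> (lift1 u \in L') = (u \in L)) ->
  candidates (inF N 0) L (P N 0 0) = [::] ->
  (forall j, j <= N -> lift0 (P N.+1 1 j) \in L') ->
  candidates (inF N.+2 1) L' (lift1 (P N 0 0)) = [::].
Proof.
move=> hL hc hall; have Hr := cross1_gen (k:=0) (d:=0) (fun _ => erefl) (leq0n _) hL hc.
apply: cand_none => -[i j]; apply/negP => hv; have [ei hj] := Hr _ _ hv; subst i.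
have hjN : j + 2 * 0 <= N by lia.
have E := X1_valid L' hjN; rewrite muln0 addn0 in E.
by move: hv; rewrite (P_k0 N 0 j) E hall //; lia.
Qed.

Lemma homog_neq w i j : homog w i j -> i != j.
Proof. by case/and5P => _ _ h1 h2 _; apply/eqP => e; subst; rewrite h1 in h2. Qed.

Lemma cand_k0 n L w : inF n 0 w -> candidates (inF n 0) L w = [::].
Proof.
move=> hw; have E := k0_word hw; apply: cand_none => -[i j]; apply/negP => /valid_homog.
by rewrite E /= => /and5P [_ _]; rewrite nthP; lia.
Qed.

Lemma cand_n1 k L w : inF 1 k w -> candidates (inF 1 k) L w = [::].
Proof.
move=> hw; have hs := inF_size hw; apply: cand_none => -[i j]; apply/negP => /valid_homog hh.
have := homog_neq hh; have /andP [] := homog_bound hh; rewrite hs /=; lia.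
Qed.

Lemma last_lift0 x u : last x (lift0 u) = false.
Proof. by rewrite /lift0 last_rcons. Qed.

Lemma last_lift1 x u : last x (lift1 u) = true.
Proof. by rewrite lift1E last_rcons. Qed.

Lemma lift01 u v : lift0 u <> lift1 v.
Proof. by move=> /(congr1 (last false)); rewrite last_lift0 last_lift1. Qed.

Lemma top_lift1 N k : 2 * k <= N.+1 -> top N.+2 k.+1 = lift1 (top N k).
Proof.
move=> h; rewrite /top; have -> : N.+3 - 2 * k.+1 = N.+1 - 2 * k by lia.
apply: P_lift1; lia.
Qed.

Lemma P_inj n k d d' : 0 < k -> d + 2 * k <= n.+1 -> d' + 2 * k <= n.+1 ->
  P n k d = P n k d' -> d = d'.
Proof.
move=> hk hd hd' E.
have H1 := congr1 (fun x => nthw x d) E; have H2 := congr1 (fun x => nthw x d') E.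
move: H1 H2 => /=; rewrite !nthP; lia.
Qed.

Lemma end_P n k a T : 2 * k <= n.+1 ->
  (a != top n k -> last a T = top n k) ->
  (a = top n k -> exists2 d, last a T = P n k d &
     [/\ d <= n.+1 - 2 * k, (0 < n.+1 - 2 * k -> d < n.+1 - 2 * k) & (k = 0 -> d = 0)]) ->
  exists2 d, d <= n.+1 - 2 * k & last a T = P n k d.
Proof.
move=> hk h1 h2; case: (eqVneq a (top n k)) => [e|ne].
  by have [d hd [hd' _ _]] := h2 e; exists d.
by exists (n.+1 - 2 * k) => //; rewrite h1.
Qed.

Lemma last_map_lift0 x T : last (lift0 x) (map lift0 T) = lift0 (last x T).
Proof. by rewrite last_map. Qed.

Definition good n k a T :=
  [/\ gseq (inF n k) [:: a] a T,
      candidates (inF n k) (a :: T) (last a T) = [::],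
      suffix_partitioned (a :: T),
      ((a != top n k -> last a T = top n k) /\
      (a = top n k -> exists2 d, last a T = P n k d &
         [/\ d <= n.+1 - 2 * k, (0 < n.+1 - 2 * k -> d < n.+1 - 2 * k) & (k = 0 -> d = 0)]))
    & (forall d0, d0 <= n.+1 - 2 * k -> a = P n k d0 ->
         forall d, d <= n.+1 - 2 * k -> P n k d \in a :: T)].

Definition Q n := forall k a, inF n k a -> exists T, good n k a T.

Lemma Q_k0 n a : inF n 0 a -> good n 0 a [::].
Proof.
move=> ha; have E := k0_word ha; split => //.
- by constructor.
- exact: cand_k0.
- by apply: SP_small.
- split; first by rewrite /top E (P_k0 _ _ 0) eqxx.
  by move=> _; exists 0 => //; split => //; lia.
- by move=> d0 _ _ d _; rewrite E (P_k0 _ _ 0) mem_head.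
Qed.

Lemma Q_n1 k a : 0 < k -> inF 1 k a -> good 1 k a [::].
Proof.
move=> hk ha; have hk1 : k = 1 by have := wbound ha; lia.
subst k; have [d hd E] := k1_word ha; have ed : d = 0 by lia. subst d.
have Et : top 1 1 = P 1 1 0 by [].
split => //.
- by constructor.
- exact: cand_n1.
- by apply: SP_small.
- split; first by rewrite E Et eqxx.
  by move=> _; exists 0 => //; split => //; lia.
- move=> d0 _ _ d hd'; have -> : d = 0 by lia. by rewrite E mem_head.
Qed.

Lemma all_lift0 L : all (fun x => ~~ last false x) (map lift0 L).
Proof. by apply/allP => x /mapP [u _ ->]; rewrite last_lift0. Qed.

Lemma all_lift1 L : all (fun x => last false x) (map lift1 L).
Proof. by apply/allP => x /mapP [u _ ->]; rewrite last_lift1. Qed.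

Lemma notin_lift1_map0 u L : (lift1 u \in map lift0 L) = false.
Proof. by apply/negP => /mapP [x _ E]; exact: (lift01 (esym E)). Qed.

Lemma notin_lift0_map1 u L : (lift0 u \in map lift1 L) = false.
Proof. by apply/negP => /mapP [x _ E]; exact: (lift01 E). Qed.

Lemma case0 N k a' : (forall n', n' < N.+2 -> Q n') -> inF N.+1 k.+1 a' ->
  exists T, good N.+2 k.+1 (lift0 a') T.
Proof.
move=> IH ha'.
have hk : 2 * k.+1 <= N.+2 := wbound ha'.
have [T1 [g1 c1 sp1 [b11 b21] cc1]] := IH N.+1 (ltnSn _) k.+1 a' ha'.
have [d1 hd1 he1] := end_P hk b11 b21.
have hd1' : d1 + 2 * k <= N by lia.
pose b := P N k d1.
have hb : inF N k b by apply: inF_P; lia.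
have [T2 [g2 c2 sp2 [b12 b22] cc2]] := IH N (leqW (ltnSn _)) k b hb.
have he2 : last b T2 = top N k.
  case: (posnP k) => [k0|kpos].
    subst k; have := last_in hb (gseq_in g2 hb); move/k0_word => ->.
    by rewrite /top (P_k0 _ _ 0).
  apply: b12; apply/eqP => E.
  have := P_inj kpos _ _ E; lia.
pose L0 := map lift0 (a' :: T1).
have hL0 : forall u, size u = N.+1 -> (rcons u false \in L0) = (u \in a' :: T1).
  by move=> u _; exact: (mem_lift0 (a' :: T1) u (isT : all _ [::])).
rewrite he1 in c1.
have hcross := cross0 hd1' hL0 c1.
rewrite /L0 notin_lift1_map0 in hcross; have [r hr] := hcross.
have hL1 : forall u, size u = N -> (lift1 u \in L0 ++ map lift1 (b :: T2)) = (u \in b :: T2).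
  by move=> u _; exact: (mem_lift1 _ u (all_lift0 _)).
exists (map lift0 T1 ++ lift1 b :: map lift1 T2).
have EL : lift0 a' :: (map lift0 T1 ++ lift1 b :: map lift1 T2) =
          L0 ++ map lift1 (b :: T2) by [].
have Elast : last (lift0 a') (map lift0 T1 ++ lift1 b :: map lift1 T2) = lift1 (top N k).
  by rewrite last_cat /= last_map he2.
have Etop : top N.+2 k.+1 = lift1 (top N k) by apply: top_lift1; lia.
split.
- apply: gseq_cat.
    by have := gseq_lift0 (Lo := [::]) g1 ha' isT.
  rewrite last_map he1; apply: (GCons (r := r)); first exact: hr.
  have := gseq_lift1 (Lo := L0) g2 hb (all_lift0 _).
  by rewrite -cats1.
- rewrite EL Elast; case: (posnP k) => [k0|kpos].
    subst k; rewrite /top (P_k0 _ _ 0); rewrite he2 /top (P_k0 _ _ 0) in c2.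
    apply: cross1_k0 hL1 c2 _ => j hj.
    have [d0 hd0 Ea'] := k1_word ha'.
    by rewrite mem_cat map_f ?(cc1 d0 hd0 Ea') //; lia.
  rewrite he2 in c2; apply: (cross1_top (d := N.+1 - 2 * k) _ _ hL1 c2); lia.
- rewrite EL; exact: SP_01.
- split.
    by move=> _; rewrite Elast Etop.
  by rewrite Etop => /lift01.
- move=> d0 hd0 Ea d hd.
  have hd0' : d0 < N.+3 - 2 * k.+1.
    case: (ltnP d0 (N.+3 - 2 * k.+1)) => // h; have ed : d0 = N.+3 - 2 * k.+1 by lia.
    by move: Ea; rewrite ed -/(top N.+2 k.+1) Etop => /lift01.
  have Ea' : a' = P N.+1 k.+1 d0.
    by apply: lift0_inj; rewrite Ea /lift0 -P_lift0 //; lia.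
  case: (ltnP d (N.+3 - 2 * k.+1)) => hdm.
    rewrite P_lift0; last by lia.
    rewrite -/(lift0 _) EL mem_cat map_f //; apply: (cc1 d0) => //; lia.
  have ed : d = N.+3 - 2 * k.+1 by lia.
  by rewrite ed -/(top N.+2 k.+1) Etop -Elast mem_last.
Qed.

Lemma case1 N k b : (forall n', n' < N.+2 -> Q n') -> inF N k b ->
  exists T, good N.+2 k.+1 (lift1 b) T.
Proof.
move=> IH hb.
have hk : 2 * k <= N.+1 := wbound hb.
have [T2 [g2 c2 sp2 [b12 b22] cc2]] := IH N (leqW (ltnSn _)) k b hb.
have Etop : top N.+2 k.+1 = lift1 (top N k) := top_lift1 hk.
have Em : N.+3 - 2 * k.+1 = N.+1 - 2 * k by lia.
have hL1 : forall u, size u = N -> (lift1 u \in map lift1 (b :: T2)) = (u \in b :: T2).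
  by move=> u _; exact: (mem_lift1 (b :: T2) u (isT : all _ [::])).
have g2' : gseq (inF N.+2 k.+1) [:: lift1 b] (lift1 b) (map lift1 T2).
  by have := gseq_lift1 (Lo := [::]) g2 hb isT.
case: (eqVneq b (top N k)) => [Eb|nb]; last first.
  have he2 := b12 nb.
  have kpos : 0 < k.
    case: (posnP k) => // k0; subst k; move: nb; rewrite (k0_word hb) /top (P_k0 _ _ 0).
    by rewrite eqxx.
  exists (map lift1 T2); split => //.
  - rewrite -/(map lift1 (b :: T2)) last_map he2; rewrite he2 in c2.
    apply: (cross1_top (d := N.+1 - 2 * k) _ _ hL1 c2); lia.
  - rewrite -/(map lift1 (b :: T2)); apply: SP_map sp2 suf_lift1.
  - split.
      by move=> _; rewrite last_map he2 Etop.
    by rewrite Etop => /lift1_inj E; move: nb; rewrite E eqxx.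
  - move=> d0 hd0 Ea d hd; exfalso.
    case: (ltnP d0 (N.+3 - 2 * k.+1)) => h.
      by move: Ea; rewrite P_lift0; [move/esym/lift01 | lia].
    have ed : d0 = N.+3 - 2 * k.+1 by lia.
    by move: Ea; rewrite ed -/(top N.+2 k.+1) Etop => /lift1_inj E; move: nb; rewrite E eqxx.
have [d2 he2 [hd2 hd2m hk0]] := b22 Eb.
rewrite he2 in c2.
case: (leqP (d2 + 2 * k) N) => hdN; last first.
  have ed2 : d2 + 2 * k = N.+1 by lia.
  exists (map lift1 T2); split => //.
  - rewrite -/(map lift1 (b :: T2)) last_map he2.
    exact: (cross1_top hk0 ed2 hL1 c2).
  - rewrite -/(map lift1 (b :: T2)); apply: SP_map sp2 suf_lift1.
  - split; first by rewrite Etop Eb eqxx.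
    move=> _; exists d2; first by rewrite last_map he2 P_lift1.
    split; lia.
  - move=> d0 hd0 Ea d hd; have -> : d = N.+3 - 2 * k.+1 by lia.
    by rewrite -/(top N.+2 k.+1) Etop -Eb mem_head.
have hnot : lift0 (P N.+1 k.+1 d2) \notin map lift1 (b :: T2) by rewrite notin_lift0_map1.
have [r hr] := cross1_step hk0 hdN hL1 c2 hnot.
pose g := P N.+1 k.+1 d2.
have hg : inF N.+1 k.+1 g by apply: inF_P; lia.
have hk1 : 2 * k.+1 <= N.+2 by lia.
have [T1 [g1 c1 sp1 [b11 b21] cc1]] := IH N.+1 (ltnSn _) k.+1 g hg.
have [d1 hd1 he1] := end_P hk1 b11 b21.
pose L1 := map lift1 (b :: T2).
have hL0 : forall u, size u = N.+1 -> (rcons u false \in L1 ++ map lift0 (g :: T1)) = (u \in g :: T1).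
  by move=> u _; exact: (mem_lift0 _ u (all_lift1 _)).
rewrite he1 in c1.
have hd1' : d1 + 2 * k <= N by lia.
have hcross := cross0 hd1' hL0 c1.
have hin : lift1 (P N k d1) \in L1 ++ map lift0 (g :: T1).
  rewrite mem_cat map_f //; apply: (cc2 (N.+1 - 2 * k)) => //; lia.
rewrite hin in hcross.
exists (map lift1 T2 ++ lift0 g :: map lift0 T1).
have EL : lift1 b :: (map lift1 T2 ++ lift0 g :: map lift0 T1) = L1 ++ map lift0 (g :: T1) by [].
have Elast : last (lift1 b) (map lift1 T2 ++ lift0 g :: map lift0 T1) = lift0 (P N.+1 k.+1 d1).
  by rewrite last_cat /= last_map he1.
split.
- apply: gseq_cat => //.
  rewrite last_map he2; apply: (GCons (r := r)); first exact: hr.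
  have := gseq_lift0 (Lo := L1) g1 hg (all_lift1 _).
  by rewrite -cats1.
- by rewrite EL Elast.
- rewrite EL; exact: SP_10.
- split; first by rewrite Etop Eb eqxx.
  move=> _; exists d1; first by rewrite Elast /lift0 -P_lift0 //; lia.
  split; lia.
- move=> d0 hd0 Ea d hd.
  case: (ltnP d (N.+3 - 2 * k.+1)) => hdm.
    rewrite P_lift0; last by lia.
    rewrite -/(lift0 _) EL mem_cat map_f ?orbT //; apply: (cc1 d2) => //; lia.
  have ed : d = N.+3 - 2 * k.+1 by lia.
  by rewrite ed -/(top N.+2 k.+1) Etop -Eb mem_head.
Qed.

Lemma Q_all n : Q n.
Proof.
elim/ltn_ind: n => n IH k a ha.
case: k ha => [|k] ha; first by exists [::]; exact: Q_k0.
case: n IH ha => [|[|N]] IH ha.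
- by have := wbound ha; lia.
- by exists [::]; apply: Q_n1.
- case: (class_split ha) => [[a' -> ha']|[k' [b [ek ->] hb]]].
    exact: case0.
  case: ek => ->; exact: case1.
Qed.

Theorem lemma2 (n k : nat) (alpha : word) :
  2 * k - 1 <= n -> inF n k alpha -> suffix_partitioned (calF n k alpha).
Proof.
move=> _ ha; have [T [g c sp _ _]] := Q_all ha.
rewrite /calF /greedy (gseq_greedy _ g c) /=.
by have := SP_take (t := (2 ^ size alpha).+1) sp.
Qed.
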